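(* Let $H$ be an $r$-uniform hypergraph on $n$ vertices with average degree $d$. Let $s(H)$ be defined by $$\mathrm{bw}(H)=\frac{nd}{r}\left(1-2^{1-r}\right)-s(H).$$ Then $\mathrm{disc}^{+}(H)\geq \frac{s(H)}{2}$.
   Context: An equipartition of a finite set is a partition into two parts whose sizes differ by at most one. A bisection of $H$ is an equipartition $V(H)=X\cup Y$ together with all edges containing at least one vertex in each part; its size is the number of such edges, and $\mathrm{bw}(H)$ is the minimum size of a bisection. The average degree is $d=r|E(H)|/n$. With edge density $p=|E(H)|/\binom{n}{r}$, for $U\subset V(H)$ let $e(U)$ be the number of edges contained in $U$ and $\mathrm{disc}(U)=e(U)-p\binom{|U|}{r}$; the positive discrepancy is $\mathrm{disc}^{+}(H)=\max_{U\subset V(H)}\mathrm{disc}(U)$. *)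

(* Defs.v *)
From HB Require Import structures.
From mathcomp Require Import all_boot all_order all_algebra.
Set Implicit Arguments. Unset Strict Implicit. Unset Printing Implicit Defensive.
Import Order.TTheory GRing.Theory Num.Theory.
Local Open Scope ring_scope.

Definition uniform (T : finType) (r : nat) (E : {set {set T}}) : Prop :=
  forall e, e \in E -> #|e| = r.

Definition equipartition (T : finType) (X : {set T}) : bool :=
  (#|X| <= #|~: X|.+1)%N && (#|~: X| <= #|X|.+1)%N.

Definition cut_size (T : finType) (E : {set {set T}}) (X : {set T}) : nat :=
  #|[set e in E | (e :&: X != set0) && (e :&: ~: X != set0)]|.

(* bisection width: minimum bisection size (cut sizes are <= #|E|) *)
Definition bw (T : finType) (E : {set {set T}}) : nat :=
  \big[minn/#|E|]_(X : {set T} | equipartition X) cut_size E X.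

Definition e_in (T : finType) (E : {set {set T}}) (U : {set T}) : nat :=
  #|[set e in E | e \subset U]|.

Definition density (R : realFieldType) (T : finType) (r : nat)
  (E : {set {set T}}) : R := #|E|%:R / ('C(#|T|, r))%:R.

Definition disc (R : realFieldType) (T : finType) (r : nat)
  (E : {set {set T}}) (U : {set T}) : R :=
  (e_in E U)%:R - density R r E * ('C(#|U|, r))%:R.

Definition disc_plus (R : realFieldType) (T : finType) (r : nat)
  (E : {set {set T}}) : R :=
  \big[Num.max/disc R r E set0]_(U : {set T}) disc R r E U.

Definition avg_deg (R : realFieldType) (T : finType) (r : nat)
  (E : {set {set T}}) : R := (r * #|E|)%:R / (#|T|)%:R.

Definition s_H (R : realFieldType) (T : finType) (r : nat)
  (E : {set {set T}}) : R :=
  (#|T|)%:R * avg_deg R r E / r%:R * (1 - (2 : R) ^ (1 - r%:Z)) - (bw E)%:R.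

(* Main.v *)
Require Import Defs.
From mathcomp Require Import all_boot all_order all_algebra.
From mathcomp Require Import zify ring lra.
Import Order.TTheory GRing.Theory Num.Theory.

Lemma binhalf (a b k : nat) : a <= b.+1 -> b <= a.+1 ->
  2 ^ k * ('C(a, k.+1) + 'C(b, k.+1)) <= 'C(a + b, k.+1).
Proof.
move=> hab hba; elim: k => [|k IH].
  by rewrite expn0 mul1n !bin1.
rewrite -(leq_pmul2l (ltn0Sn k.+1)) mulnCA mulnDr !mul_bin_left.
rewrite expnS -mulnA.
apply: (@leq_trans (2 ^ k * ('C(a, k.+1) + 'C(b, k.+1)) * (a + b - k.+1))).
  have h1 : 2 * (a - k.+1) <= a + b - k.+1 by lia.
  have h2 : 2 * (b - k.+1) <= a + b - k.+1 by lia.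
  move: h1 h2; generalize (2 ^ k) ('C(a, k.+1)) ('C(b, k.+1)) (a - k.+1) (b - k.+1) (a + b - k.+1).
  move=> x ca cb u v w h1 h2.
  have e1 : ca * (2 * u) <= ca * w by rewrite leq_mul2l h1 orbT.
  have e2 : cb * (2 * v) <= cb * w by rewrite leq_mul2l h2 orbT.
  have e3 : x * (ca * (2 * u) + cb * (2 * v)) <= x * (ca * w + cb * w) by rewrite leq_mul2l leq_add ?orbT.
  nia.
by rewrite mulnC leq_mul2l IH orbT.
Qed.
Local Open Scope ring_scope.
Lemma cover_cut (T : finType) (E : {set {set T}}) (X : {set T}) :
  (#|E| <= cut_size E X + e_in E X + e_in E (~: X))%N.
Proof.
rewrite /cut_size /e_in.
apply: (leq_trans _ (leq_add (leq_card_setU _ _) (leqnn _))).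
apply: (leq_trans _ (leq_card_setU _ _)).
apply: subset_leq_card; apply/subsetP => e he.
rewrite !inE he /=.
case: (boolP (e :&: X == set0)) => h1.
  by rewrite -disjoints_subset -setI_eq0 h1 !orbT.
case: (boolP (e :&: ~: X == set0)) => h2 //.
by rewrite -(setCK X) -disjoints_subset setCK -setI_eq0 h2 orbT.
Qed.

Lemma ev (R : realFieldType) (T : finType) (E : {set {set T}}) : forall (k : nat) X,
  equipartition X ->
  (#|E|%:R * (1 - (2 ^+ k)^-1) - 2 * disc_plus R k.+1 E <= (cut_size E X)%:R :> R).
Proof.
move=> k X /andP [h1 h2].
set D := disc_plus R k.+1 E.
have hD : forall U, disc R k.+1 E U <= D by move=> U; apply: le_bigmax.
have hc := @cover_cut T E X.
have hX := hD X; have hXc := hD (~: X).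
move: hX hXc; rewrite /disc => hX hXc.
set p := density R k.+1 E.
have hb := @binhalf _ _ k h1 h2.
rewrite cardsC in hb.
have key : p * ('C(#|X|, k.+1)%:R + 'C(#|~: X|, k.+1)%:R) <= #|E|%:R * (2 ^+ k)^-1.
  rewrite /p /density.
  case: (posnP 'C(#|T|, k.+1)) => hC.
    by rewrite hC invr0 mulr0 mul0r mulr_ge0 // invr_ge0 exprn_ge0.
  rewrite -mulrA ler_wpM2l //.
  rewrite mulrC ler_pdivrMr ?ltr0n // mulrC ler_pdivlMr ?exprn_gt0 //.
  by rewrite -natrD -natrX -natrM ler_nat mulnC.
have hc' : (#|E|%:R : R) <= (cut_size E X)%:R + (e_in E X)%:R + (e_in E (~: X))%:R.
  by rewrite -!natrD ler_nat.
rewrite mulrDr in key; rewrite -/p in hX hXc; rewrite mulrBr mulr1; lra.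
Qed.

Theorem lemma1p4 (R : realFieldType) (T : finType) (r : nat)
  (E : {set {set T}}) :
  uniform r E ->
  s_H R r E / 2 <= disc_plus R r E.
Proof.
move=> _.
have D0 : 0 <= disc_plus R r E.
  apply: le_trans (le_bigmax _ _ [set: T]).
  rewrite /disc /density cardsT.
  have -> : e_in E [set: T] = #|E|.
    rewrite /e_in; have -> : [set e in E | e \subset [set: T]] = E.
      by apply/setP => e; rewrite !inE subsetT andbT.
    by [].
  case: (posnP 'C(#|T|, r)) => hC.
    by rewrite hC invr0 !mulr0 subr0.
  by rewrite mulfVK ?subrr // pnatr_eq0 -lt0n.
rewrite ler_pdivrMr ?ltr0n // /s_H.
case: r D0 => [|k] D0; set D := disc_plus _ _ _ in D0 *.
  by rewrite invr0 mulr0 mul0r sub0r; apply: le_trans (mulr_ge0 D0 (ler0n _ 2)); rewrite oppr_le0.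
case: (posnP #|T|) => hT.
  by rewrite hT !mul0r sub0r; apply: le_trans (mulr_ge0 D0 (ler0n _ 2)); rewrite oppr_le0.
have -> : (#|T|)%:R * avg_deg R k.+1 E / k.+1%:R = #|E|%:R :> R.
  rewrite /avg_deg natrM.
  have ha : (#|T|%:R : R) != 0 by rewrite pnatr_eq0 -lt0n hT.
  have hb : (k.+1%:R : R) != 0 by rewrite pnatr_eq0.
  by rewrite mulrCA mulfV // mulr1 mulrC mulKf.
have -> : (2 : R) ^ (1 - (k.+1)%:Z) = (2 ^+ k)^-1.
  by rewrite exprnN; congr (_ ^ _); lia.
set c := (#|E|%:R * (1 - (2 ^+ k)^-1) - 2 * D : R).
have hbw : c <= (bw E)%:R.
  rewrite /bw; apply: (big_ind (fun x : nat => c <= x%:R)).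
  - rewrite /c; have : 0 <= (#|E|%:R : R) * (2 ^+ k)^-1 by rewrite mulr_ge0 // invr_ge0 exprn_ge0.
    rewrite mulrBr mulr1; lra.
  - by move=> x y hx hy; rewrite /minn; case: ifP.
  - by move=> X hX; apply: ev.
rewrite mulrC; rewrite /c in hbw; lra.
Qed.
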